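(* Let $\lambda, N, t, m, s, v$ be positive integers. (1) If $t\ge 2$, $t\le m(t-1)$, and there exists an $OCA_{\lambda}(N;t,m,t-1,v)$, then there exists an $OCA_{\lambda}(N;t,m,t,v)$. (2) If $s\ge 2$, $2\le t\le m(s-1)$, and there exists an $OCA_{\lambda}(N;t,m,s,v)$, then there exists an $OCA_{\lambda}(N;t,m,s-1,v)$. (3) If $m\ge 2$, $2\le t\le (m-1)s$, and there exists an $OCA_{\lambda}(N;t,m,s,v)$, then there exists an $OCA_{\lambda}(N;t,m-1,s,v)$.
   Context: For positive integers $m,s$, the RT poset $[m\times s]$ is the set $\{1,\ldots,ms\}$ partitioned into $m$ blocks $B_i=\{is+1,\ldots,(i+1)s\}$ ($i=0,\ldots,m-1$); each block is a chain under the usual order of the integers, and elements of different blocks are incomparable. An ideal is a subset $I$ such that $b\in I$ and $a\preceq b$ imply $a\in I$; an anti-ideal is the complement of an ideal. Given an $N\times n$ array $A$ over an alphabet $V$ of size $v$, a set of $t$ columns is $\lambda$-covered if in the $N\times t$ subarray formed by those columns every $t$-tuple over $V$ appears as a row at least $\lambda$ times. For positive integers with $2\le t\le ms$, an ordered covering array $OCA_{\lambda}(N;t,m,s,v)$ is an $N\times ms$ array over an alphabet of size $v$ whose columns are labeled by the elements of the RT poset $[m\times s]$, such that for every anti-ideal $J$ of size $t$ the set of columns labeled by $J$ is $\lambda$-covered. *)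

(* Defs.v *)
From mathcomp Require Import all_boot.
Set Implicit Arguments. Unset Strict Implicit. Unset Printing Implicit Defensive.

(* The RT poset [m x s]: element k : 'I_(m*s) stands for k+1 in {1..ms};
   its block is k %/ s, and within a block the order is the integer order. *)
Definition rt_le (m s : nat) (a b : 'I_(m * s)) : bool :=
  (a %/ s == b %/ s) && (a <= b).

Definition is_ideal (m s : nat) (I : {set 'I_(m * s)}) : bool :=
  [forall a, forall b, (b \in I) && rt_le a b ==> (a \in I)].

Definition is_anti_ideal (m s : nat) (J : {set 'I_(m * s)}) : bool :=
  is_ideal (~: J).

Definition array (N n v : nat) := {ffun 'I_N -> {ffun 'I_n -> 'I_v}}.

Definition lambda_covered (lam N n v : nat) (A : array N n v)
    (C : {set 'I_n}) : Prop :=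
  forall f : {ffun 'I_n -> 'I_v},
    lam <= #|[set r : 'I_N | [forall c in C, A r c == f c]]|.

Definition is_OCA (lam N t m s v : nat) (A : array N (m * s) v) : Prop :=
  forall J : {set 'I_(m * s)},
    is_anti_ideal J -> #|J| = t -> lambda_covered lam A J.

Definition OCA_exists (lam N t m s v : nat) : Prop :=
  exists A : array N (m * s) v, is_OCA lam t A.

(* Main.v *)
Require Import Defs.
From mathcomp Require Import all_boot zify.
Lemma lt_qr m s q r : q < m -> r < s -> q*s + r < m*s.
Proof. nia. Qed.
Lemma divmodE s q r : r < s -> ((q*s + r) %/ s = q) * ((q*s + r) %% s = r).
Proof. move=> rs; have s0 : 0 < s by case: s rs.
by rewrite divnMDl // divn_small // addn0 modnMDl modn_small. Qed.
Lemma rt_leE m s (a b : 'I_(m*s)) : rt_le a b = (a %/ s == b %/ s) && (a %% s <= b %% s).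
Proof. rewrite /rt_le; case: eqP => //= E.
by rewrite {1}(divn_eq a s) {1}(divn_eq b s) E leq_add2l. Qed.
Lemma antiP m s (J : {set 'I_(m*s)}) :
  reflect (forall a b, a \in J -> rt_le a b -> b \in J) (is_anti_ideal J).
Proof.
apply: (iffP forallP) => H.
- move=> a b aJ ab; move/forallP: (H a) => /(_ b) /implyP.
  rewrite !inE ab andbT => H2; apply/contraT => /H2; by rewrite aJ.
- move=> a; apply/forallP => b; apply/implyP; rewrite !inE => /andP[bJ ab].
  by apply/negP => aJ; move: bJ; rewrite (H a b aJ ab).
Qed.
Lemma transfer lam N n n' v (A : array N n v) (phi : 'I_n' -> 'I_n) (J : {set 'I_n'}) :
  0 < v -> {in J &, injective phi} -> lambda_covered lam A (phi @: J) ->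
  lambda_covered lam ([ffun r => [ffun c => A r (phi c)]] : array N n' v) J.
Proof.
move=> v0 inj cov f.
pose g := [ffun x => if [pick c in J | phi c == x] is Some c then f c else Ordinal v0].
apply: leq_trans (cov g) _; apply: subset_leq_card; apply/subsetP => r.
rewrite !inE => /forallP H; apply/forallP => c; apply/implyP => cJ.
rewrite !ffunE.
have /implyP := H (phi c); rewrite imset_f // => /(_ isT) /eqP ->.
rewrite ffunE; case: pickP => [c' /andP[c'J /eqP E]|].
- by rewrite (inj _ _ c'J cJ E).
- by move/(_ c); rewrite cJ eqxx.
Qed.

Lemma embed m s m' s' (phi : 'I_(m'*s') -> 'I_(m*s)) (D : pred 'I_(m'*s')) (J : {set 'I_(m'*s')}) :
 is_anti_ideal J -> {subset J <= D} ->
 (forall a b, D a -> D b -> rt_le a b = rt_le (phi a) (phi b)) ->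
 (forall a z, D a -> rt_le (phi a) z -> exists2 c, D c & phi c = z) ->
 {in J &, injective phi} /\ is_anti_ideal (phi @: J).
Proof.
move=> /antiP aJ sJD P1 P2; split.
- move=> a b /sJD Da /sJD Db E; apply: val_inj; apply/eqP; rewrite eqn_leq.
  have h1 := P1 a b Da Db; have h2 := P1 b a Db Da.
  rewrite E /rt_le eqxx leqnn /= in h1 h2.
  by move: h1 h2; rewrite /rt_le => /andP[_ ->] /andP[_ ->].
- apply/antiP => x z /imsetP[a aJa ->] az.
  have [c Dc E] := P2 a z (sJD _ aJa) az.
  rewrite -E imset_f //; apply: (aJ a) => //; rewrite P1 ?E //; exact: sJD.
Qed.
Lemma oca_transfer lam N t m s m' s' v (phi : 'I_(m'*s') -> 'I_(m*s)) : 0 < v ->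
 (forall J : {set 'I_(m'*s')}, is_anti_ideal J -> #|J| = t ->
    {in J &, injective phi} /\ is_anti_ideal (phi @: J)) ->
 OCA_exists lam N t m s v -> OCA_exists lam N t m' s' v.
Proof.
move=> v0 H [A oA]; exists [ffun r => [ffun c => A r (phi c)]] => J aJ cJ.
have [inj aI] := H J aJ cJ.
apply: transfer => //; apply: oA => //; by rewrite card_in_imset.
Qed.

Lemma case3 lam N t m s v : 0 < v -> 0 < s ->
  OCA_exists lam N t m s v -> OCA_exists lam N t (m - 1) s v.
Proof.
move=> v0 s0; have le : (m - 1) * s <= m * s by rewrite leq_mul2r leq_subr orbT.
apply: (@oca_transfer lam N t m s (m-1) s v (widen_ord le)) => // J aJ _.
apply: (@embed _ _ _ _ _ predT) => // a z _ az.
have zlt : z < (m - 1) * s.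
  rewrite -ltn_divLR //; move: az; rewrite /rt_le /= => /andP[/eqP <- _].
  by rewrite ltn_divLR.
by exists (Ordinal zlt) => //; apply: val_inj.
Qed.

Lemma case2 lam N t m s v : 0 < v -> 2 <= s ->
  OCA_exists lam N t m s v -> OCA_exists lam N t m (s - 1) v.
Proof.
move=> v0 s2; have s0 : 0 < s - 1 by lia.
have lt : forall c : 'I_(m * (s - 1)), (c %/ (s-1)) * s + (c %% (s-1)).+1 < m * s.
  move=> c; apply: lt_qr; first by rewrite ltn_divLR.
  have := ltn_pmod c s0; lia.
apply: (@oca_transfer lam N t m s m (s-1) v (fun c => Ordinal (lt c))) => // J aJ _.
have mS : forall c : 'I_(m * (s - 1)), (c %% (s-1)).+1 < s.
  move=> c; have := ltn_pmod c s0; lia.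
apply: (@embed _ _ _ _ _ predT) => //.
- move=> a b _ _; rewrite !rt_leE /= !divmodE ?mS //.
- move=> a z _; rewrite rt_leE /= !divmodE ?mS // => /andP[/eqP E le].
  have zs : 0 < z %% s by lia.
  have clt : z %/ s * (s - 1) + (z %% s).-1 < m * (s - 1).
    apply: lt_qr; first by rewrite ltn_divLR // ?ltn_ord; lia.
    have := ltn_pmod z (ltnW s2); lia.
  exists (Ordinal clt) => //; apply: val_inj => /=.
  have r1 : (z %% s).-1 < s - 1 by have := ltn_pmod z (ltnW s2); lia.
  by rewrite !divmodE // prednK // -divn_eq.
Qed.

Lemma eq_qr s q1 r1 q2 r2 : r1 < s -> r2 < s -> q1 * s + r1 = q2 * s + r2 -> q1 = q2 /\ r1 = r2.
Proof. move=> h1 h2 E.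
have [A1 B1] := divmodE s q1 r1 h1; have [A2 B2] := divmodE s q2 r2 h2.
by split; [rewrite -A1 E A2 | rewrite -B1 E B2].
Qed.

Lemma case1 lam N t m v : 0 < v -> 2 <= t -> 2 <= m ->
  OCA_exists lam N t m (t - 1) v -> OCA_exists lam N t m t v.
Proof.
move=> v0 t2 m2; have s0 : 0 < t - 1 by lia.
have t0 : 0 < t by lia.
have m0 : 0 < m by lia.
pose f (c : nat) := if c %% t == 0 then ((c %/ t).+1 %% m) * (t - 1) + (t - 1).-1
                    else (c %/ t) * (t - 1) + (c %% t).-1.
have lt : forall c : 'I_(m * t), f c < m * (t - 1).
  move=> c; rewrite /f; case: ifP => H.
  - apply: lt_qr; [exact: ltn_pmod | lia].
  - apply: lt_qr; first by rewrite ltn_divLR.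
    have := ltn_pmod c t0; lia.
apply: (@oca_transfer lam N t m (t-1) m t v (fun c => Ordinal (lt c))) => // J aJ cJ.
have rlt : forall c : nat, c %% t != 0 -> (c %% t).-1 < t - 1.
  move=> c; have := ltn_pmod c t0; lia.
case: (boolP [exists c in J, c %% t == 0]) => [/existsP[c0 /andP[c0J /eqP c00]]|noB].
- set q0 := c0 %/ t.
  have q0m : q0 < m by rewrite ltn_divLR.
  pose q' := q0.+1 %% m.
  have q'm : q' < m by exact: ltn_pmod.
  have q'n : q' != q0.
    rewrite /q'; case: (ltngtP q0.+1 m) => H.
    - by rewrite modn_small // neq_ltn ltnSn orbT.
    - lia.
    - rewrite H modnn; lia.
  pose Bq := [set x : 'I_(m * t) | x %/ t == q0].
  have BJ : Bq \subset J.
    apply/subsetP => x; rewrite inE => /eqP xq.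
    move/antiP: aJ => aJ'; apply: (aJ' c0) => //; by rewrite rt_leE c00 xq eqxx /=.
  have EJ : Bq = J.
    apply/eqP; rewrite eqEcard BJ cJ /=.
    pose g (r : 'I_t) : 'I_(m * t) := Ordinal (@lt_qr m t q0 r q0m (ltn_ord r)).
    have ginj : injective g.
      by move=> r1 r2 /(congr1 val) /= /addnI /val_inj.
    rewrite -[X in X <= _]card_ord -(card_imset _ ginj).
    apply: subset_leq_card; apply/subsetP => x /imsetP[r _ ->].
    by rewrite inE /= divmodE.
  rewrite -EJ; split.
  + move=> x y; rewrite !inE => /eqP xq /eqP yq /(congr1 val) /=.
    rewrite /f xq yq -/q'.
    have rx := rlt x; have ry := rlt y.
    case: eqP => X; case: eqP => Y.
    * move=> _; apply: val_inj; rewrite /= (divn_eq x t) (divn_eq y t) X Y xq yq //.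
    * move=> E; have [] := eq_qr (t - 1) _ _ _ _ _ _ E.
      - lia.
      - by apply: rlt; apply/eqP.
      - by move=> E'; move: q'n; rewrite E' eqxx.
    * move=> E; have [] := eq_qr (t - 1) _ _ _ _ _ _ E.
      - by apply: rlt; apply/eqP.
      - lia.
      - by move=> E'; move: q'n; rewrite E' eqxx.
    * move=> E; have [] := eq_qr (t - 1) _ _ _ _ _ _ E.
      - by apply: rlt; apply/eqP.
      - by apply: rlt; apply/eqP.
      move=> _ E'; apply: val_inj.
      rewrite /= (divn_eq x t) (divn_eq y t) xq yq; congr (_ + _).
      lia.
  + apply/antiP => a z /imsetP[x]; rewrite inE => /eqP xq -> {a}.
    rewrite rt_leE /= /f xq -/q'.
    have zlt := ltn_pmod z s0.
    case X: (x %% t == 0).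
    * have hs : (t - 1).-1 < t - 1 by lia.
      rewrite !(divmodE _ _ _ hs).
      move=> /andP[/eqP E le].
      have -> : z = Ordinal (lt x).
        apply: val_inj; rewrite /= /f X xq -/q' (divn_eq z (t - 1)) -E.
        congr (_ + _); lia.
      by rewrite imset_f // inE xq.
    * have hs : (x %% t).-1 < t - 1 by apply: rlt; rewrite X.
      rewrite !(divmodE _ _ _ hs).
      move=> /andP[/eqP E le].
      have zr : (z %% (t - 1)).+1 < t by lia.
      have clt : q0 * t + (z %% (t - 1)).+1 < m * t by apply: lt_qr.
      apply/imsetP; exists (Ordinal clt); first by rewrite inE /= divmodE.
      apply: val_inj; rewrite /= /f !divmodE //= E -divn_eq //.
- apply: (@embed _ _ _ _ _ (fun c : 'I_(m * t) => c %% t != 0)) => //.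
  + move=> c cJ1 /=; apply/negP => /eqP E; move/negP: noB; apply; apply/existsP.
    by exists c; rewrite cJ1 E.
  + move=> a b Da Db; rewrite !rt_leE /= /f (negbTE Da) (negbTE Db) !divmodE ?rlt //.
    congr (_ && _); apply/idP/idP; lia.
  + move=> a z Da; rewrite rt_leE /= /f (negbTE Da) divmodE ?rlt // => /andP[/eqP E le].
    have zr : (z %% (t - 1)).+1 < t by have := ltn_pmod z s0; lia.
    have clt : z %/ (t - 1) * t + (z %% (t - 1)).+1 < m * t.
      apply: lt_qr => //; rewrite ltn_divLR //; exact: ltn_ord.
    exists (Ordinal clt) => /=; first by rewrite divmodE.
    apply: val_inj => /=; rewrite /f !divmodE //=.
    by rewrite -divn_eq.
Qed.

Theorem proposition2 (lam N t m s v : nat) :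
  0 < lam -> 0 < N -> 0 < t -> 0 < m -> 0 < s -> 0 < v ->
  [/\ (2 <= t -> t <= m * (t - 1) ->
        OCA_exists lam N t m (t - 1) v -> OCA_exists lam N t m t v),
      (2 <= s -> 2 <= t -> t <= m * (s - 1) ->
        OCA_exists lam N t m s v -> OCA_exists lam N t m (s - 1) v)
    & (2 <= m -> 2 <= t -> t <= (m - 1) * s ->
        OCA_exists lam N t m s v -> OCA_exists lam N t (m - 1) s v)].
Proof.
move=> _ _ _ m0 s0 v0; split.
- move=> t2 tm; apply: case1 => //.
  case: m m0 tm => [|[|m]] //= _; rewrite mul1n; lia.
- by move=> s2 _ _; apply: case2.
- by move=> _ _ _; apply: case3.
Qed.
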